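(* Let $k\ge1$ and let $G_{k+1}=H_1\star_{C_1}H_2\star_{C_2}\cdots H_k\star_{C_k}H_{k+1}$ be an iterated amalgamated free product, where each $C_i$ embeds in $H_i$ and in $H_{i+1}$. Suppose for some $2\le n\le\infty$ the image of each $C_i$ in $H_i$ and in $H_{i+1}$ is $n$-RF (i.e. the pairs $(H_i,C_i)$ and $(H_{i+1},C_i)$ are $n$-RF). Then the subgroups $G_k=H_1\star_{C_1}\cdots H_k$ and $H_{k+1}$ are both $n$-RF in $G_{k+1}$, i.e. $(G_{k+1},G_k)$ and $(G_{k+1},H_{k+1})$ are $n$-RF.
   Context: For a group $G$, subgroup $D$, and $2\le n\le\infty$: $a\in G\setminus D$ is $n$-RF rel $D$ if $a^{e_1}d_1\cdots a^{e_k}d_k\ne\mathrm{id}$ for all $k\ge1$, $e_i\in\{\pm1\}$, $d_i\in D$ such that $d_i\ne\mathrm{id}$ whenever $e_i=-e_{i+1}$ (indices mod $k$), and fewer than $n$ of the $e_i$ are $+1$ and fewer than $n$ are $-1$. The pair $(G,D)$ is $n$-RF if every element of $G\setminus D$ is $n$-RF rel $D$. *)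

(* Defs.v *)
From Stdlib Require Import List Arith.
Import ListNotations.

Record Grp := {
  gcar :> Type;
  gmul : gcar -> gcar -> gcar;
  gone : gcar;
  ginv : gcar -> gcar;
  gassoc : forall x y z, gmul x (gmul y z) = gmul (gmul x y) z;
  gmul1l : forall x, gmul gone x = x;
  gmulVl : forall x, gmul (ginv x) x = gone
}.

Arguments gmul {g} _ _.
Arguments gone {g}.
Arguments ginv {g} _.

Definition is_hom (A B : Grp) (f : A -> B) : Prop :=
  forall x y, f (gmul x y) = gmul (f x) (f y).

Definition injective {A B : Type} (f : A -> B) : Prop :=
  forall x y, f x = f y -> x = y.

Definition image {A B : Type} (f : A -> B) : B -> Prop :=
  fun y => exists x, y = f x.

(* P with iA, iB is the amalgamated free product A *_C B along f : C -> A,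
   g : C -> B, defined by its universal property (pushout of groups). *)
Definition is_amalgam (C A B P : Grp) (f : C -> A) (g : C -> B)
    (iA : A -> P) (iB : B -> P) : Prop :=
  is_hom A P iA /\ is_hom B P iB /\ (forall c, iA (f c) = iB (g c)) /\
  forall (K : Grp) (hA : A -> K) (hB : B -> K),
    is_hom A K hA -> is_hom B K hB -> (forall c, hA (f c) = hB (g c)) ->
    (exists h : P -> K, is_hom P K h /\ (forall a, h (iA a) = hA a) /\
                        (forall b, h (iB b) = hB b)) /\
    (forall h1 h2 : P -> K,
        is_hom P K h1 -> (forall a, h1 (iA a) = hA a) -> (forall b, h1 (iB b) = hB b) ->
        is_hom P K h2 -> (forall a, h2 (iA a) = hA a) -> (forall b, h2 (iB b) = hB b) ->
        forall x, h1 x = h2 x).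

(* n in {2,...,oo}: None stands for oo. *)
Definition below (n : option nat) (m : nat) : Prop :=
  match n with None => True | Some n' => m < n' end.

Definition gpow {G : Grp} (e : bool) (a : G) : G := if e then a else ginv a.

(* a^{e_1} d_1 ... a^{e_k} d_k for w = [(e_1,d_1); ...; (e_k,d_k)] *)
Definition word_eval {G : Grp} (a : G) (w : list (bool * G)) : G :=
  fold_right (fun p acc => gmul (gmul (gpow (fst p) a) (snd p)) acc) gone w.

(* a is n-RF relative to D (a is assumed outside D in the definition of pairs) *)
Definition nRF_rel (G : Grp) (D : G -> Prop) (n : option nat) (a : G) : Prop :=
  forall w : list (bool * G),
    w <> [] ->
    (forall i, i < length w -> D (snd (nth i w (true, gone)))) ->
    (forall i, i < length w ->
        fst (nth i w (true, gone)) = negb (fst (nth ((i + 1) mod length w) w (true, gone))) ->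
        snd (nth i w (true, gone)) <> gone) ->
    below n (length (filter (fun p => fst p) w)) ->
    below n (length (filter (fun p => negb (fst p)) w)) ->
    word_eval a w <> gone.

Definition nRF_pair (G : Grp) (D : G -> Prop) (n : option nat) : Prop :=
  forall a : G, ~ D a -> nRF_rel G D n a.

(* Main.v *)
Require Import Defs.
From Stdlib Require Import List Arith Lia.
From Stdlib Require Import Classical ClassicalEpsilon FunctionalExtensionality ProofIrrelevance PropExtensionality.
Import ListNotations.

Infix "**" := gmul (at level 40, left associativity).

Section GrpFacts.
Variable G : Grp.
Implicit Types x y z : G.

Lemma mA x y z : x ** (y ** z) = x ** y ** z.
Proof. apply gassoc. Qed.
Lemma m1l x : gone ** x = x.
Proof. apply gmul1l. Qed.
Lemma mVl x : ginv x ** x = gone.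
Proof. apply gmulVl. Qed.
Lemma mVr x : x ** ginv x = gone.
Proof.
  rewrite <- (m1l (x ** ginv x)).
  rewrite <- (mVl (ginv x)) at 1.
  rewrite <- mA. rewrite (mA (ginv x) x (ginv x)). rewrite mVl, m1l. apply mVl.
Qed.
Lemma m1r x : x ** gone = x.
Proof. rewrite <- (mVl x), mA, mVr, m1l. reflexivity. Qed.
Lemma mKl x y : ginv x ** (x ** y) = y.
Proof. rewrite mA, mVl, m1l. reflexivity. Qed.
Lemma mKl' x y : x ** (ginv x ** y) = y.
Proof. rewrite mA, mVr, m1l. reflexivity. Qed.
Lemma mKr x y : x ** y ** ginv y = x.
Proof. rewrite <- mA, mVr, m1r. reflexivity. Qed.
Lemma mKr' x y : x ** ginv y ** y = x.
Proof. rewrite <- mA, mVl, m1r. reflexivity. Qed.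
Lemma mcanl x y z : x ** y = x ** z -> y = z.
Proof. intro H. rewrite <- (mKl x y), H, mKl. reflexivity. Qed.
Lemma mcanr x y z : y ** x = z ** x -> y = z.
Proof. intro H. rewrite <- (mKr y x), H, mKr. reflexivity. Qed.
Lemma inv_uniq x y : x ** y = gone -> y = ginv x.
Proof. intro H. apply (mcanl x). rewrite H, mVr. reflexivity. Qed.
Lemma inv_uniq' x y : x ** y = gone -> x = ginv y.
Proof. intro H. apply (mcanr y). rewrite H, mVl. reflexivity. Qed.
Lemma invK x : ginv (ginv x) = x.
Proof. symmetry. apply inv_uniq. apply mVl. Qed.
Lemma inv1 : ginv (@gone G) = gone.
Proof. symmetry. apply inv_uniq. apply m1l. Qed.
Lemma invM x y : ginv (x ** y) = ginv y ** ginv x.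
Proof. symmetry. apply inv_uniq. rewrite mA, <- (mA x y), mVr, m1r, mVr. reflexivity. Qed.
Lemma inv_eq1 x : ginv x = gone -> x = gone.
Proof. intro H. rewrite <- (invK x), H. apply inv1. Qed.
Lemma mul_eq1 x y : x ** y = gone -> x = ginv y.
Proof. apply inv_uniq'. Qed.
Lemma conj_eq1 x y : x ** y ** ginv x = gone -> y = gone.
Proof. intro H. apply mul_eq1 in H. rewrite invK in H.
  apply (mcanl x). rewrite m1r. exact H. Qed.
End GrpFacts.

Arguments inv1 {G}.
Arguments mA {G}.
Arguments m1l {G}.
Arguments mVl {G}.
Arguments mVr {G}.
Arguments m1r {G}.
Arguments mKl {G}.
Arguments mKl' {G}.
Arguments mKr {G}.
Arguments mKr' {G}.
Arguments mcanl {G}.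
Arguments mcanr {G}.
Arguments inv_uniq {G}.
Arguments inv_uniq' {G}.
Arguments invK {G}.
Arguments invM {G}.
Arguments inv_eq1 {G}.
Arguments mul_eq1 {G}.
Arguments conj_eq1 {G}.

Section HomFacts.
Variables (A B : Grp) (h : A -> B).
Hypothesis Hh : is_hom A B h.
Lemma hom1 : h gone = gone.
Proof. apply (mcanl (h gone)). rewrite <- Hh, !m1r. reflexivity. Qed.
Lemma homV x : h (ginv x) = ginv (h x).
Proof. apply inv_uniq. rewrite <- Hh, mVr. apply hom1. Qed.
End HomFacts.

Lemma hom_comp (A B C : Grp) (h1 : A -> B) (h2 : B -> C) :
  is_hom A B h1 -> is_hom B C h2 -> is_hom A C (fun x => h2 (h1 x)).
Proof. intros H1 H2 x y. rewrite H1, H2. reflexivity. Qed.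

Lemma inj_comp (A B C : Type) (h1 : A -> B) (h2 : B -> C) :
  injective h1 -> injective h2 -> injective (fun x => h2 (h1 x)).
Proof. intros H1 H2 x y E. apply H1, H2, E. Qed.

Definition subgrp {G : Grp} (D : G -> Prop) :=
  D gone /\ (forall x y, D x -> D y -> D (x ** y)) /\ (forall x, D x -> D (ginv x)).

Lemma image_subgrp (A B : Grp) (h : A -> B) : is_hom A B h -> subgrp (image h).
Proof.
  intro Hh. split; [|split].
  - exists gone. symmetry. apply hom1; auto.
  - intros x y [a ->] [b ->]. exists (a ** b). rewrite Hh. reflexivity.
  - intros x [a ->]. exists (ginv a). rewrite homV; auto.
Qed.

Lemma gpow_neg {G : Grp} (e : bool) (x : G) : gpow (negb e) x = ginv (gpow e x).
Proof. destruct e; simpl; [reflexivity| rewrite invK; reflexivity]. Qed.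

Lemma word_eval_app {G : Grp} (x : G) u v :
  word_eval x (u ++ v) = word_eval x u ** word_eval x v.
Proof. induction u as [|p u IH]; simpl. - rewrite m1l. reflexivity. - rewrite IH, !mA. reflexivity. Qed.

Lemma word_eval_cons {G : Grp} (x : G) e d w :
  word_eval x ((e,d) :: w) = gpow e x ** d ** word_eval x w.
Proof. reflexivity. Qed.

Lemma word_eval_snoc {G : Grp} (x : G) u e d z :
  word_eval x (u ++ [(e,d)]) ** z = word_eval x (u ++ [(e, d ** z)]).
Proof. rewrite !word_eval_app. simpl. rewrite !m1r, !mA. reflexivity. Qed.

Definition mapc {A B : Type} (h : A -> B) (w : list (bool * A)) : list (bool * B) :=
  map (fun p => (fst p, h (snd p))) w.

Lemma word_eval_hom (A B : Grp) (h : A -> B) (Hh : is_hom A B h) (x : A) w :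
  word_eval (h x) (mapc h w) = h (word_eval x w).
Proof.
  induction w as [|[e d] w IH]; simpl.
  - symmetry. apply hom1; auto.
  - rewrite IH, !Hh. destruct e; simpl; [reflexivity| rewrite homV; auto].
Qed.

Lemma filter_mapc {A B : Type} (h : A -> B) (q : bool -> bool) w :
  length (filter (fun p => q (fst p)) (mapc h w)) = length (filter (fun p => q (fst p)) w).
Proof. induction w as [|[e d] w IH]; simpl; auto. destruct (q e); simpl; auto. Qed.
Definition Jn {G : Grp} (p p' : bool * G) : Prop := fst p = negb (fst p') -> snd p <> gone.
Fixpoint chain {G : Grp} (w : list (bool * G)) : Prop :=
  match w with
  | [] => True
  | p :: r => match r with [] => True | p' :: _ => Jn p p' /\ chain r end
  end.
Definition cyc {G : Grp} (w : list (bool * G)) : Prop :=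
  chain w /\ forall p0 r, w = p0 :: r -> Jn (last w p0) p0.

Definition nthcond {G : Grp} (w : list (bool * G)) : Prop :=
  forall i, i < length w ->
        fst (nth i w (true, gone)) = negb (fst (nth ((i + 1) mod length w) w (true, gone))) ->
        snd (nth i w (true, gone)) <> gone.

Lemma chain_tl {G : Grp} (p : bool * G) r : chain (p :: r) -> chain r.
Proof. destruct r; simpl; tauto. Qed.

Lemma chain_nth {G : Grp} (w : list (bool * G)) d :
  chain w <-> forall i, S i < length w -> Jn (nth i w d) (nth (S i) w d).
Proof.
  induction w as [|p r IH]; simpl.
  - split; auto. intros _ i Hi; lia.
  - destruct r as [|p' r'].
    + split; auto. intros _ i Hi; simpl in Hi; lia.
    + rewrite IH. split.
      * intros [H1 H2] i Hi. destruct i as [|i]; simpl; auto.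
        apply (H2 i). simpl in *; lia.
      * intros H. split. apply (H 0); simpl; lia.
        intros i Hi. apply (H (S i)). simpl in *; lia.
Qed.

Lemma last_indep {T : Type} (l : list T) d d' : l <> [] -> last l d = last l d'.
Proof.
  induction l as [|a l IH]; intro Hl; [congruence|].
  destruct l as [|b l]; simpl; auto. apply IH; discriminate.
Qed.

Lemma last_app_cons {T : Type} (u v : list T) q d : last (u ++ q :: v) d = last (q :: v) d.
Proof.
  induction u as [|a u IH]; simpl; auto.
  destruct u as [|b u]; simpl in *; auto.
Qed.

Lemma nth_last_eq {T : Type} (l : list T) d : l <> [] -> nth (length l - 1) l d = last l d.
Proof.
  induction l as [|a l IH]; intro Hl; [congruence|].
  destruct l as [|b l]; [reflexivity|].
  change (last (a :: b :: l) d) with (last (b :: l) d). rewrite <- IH by discriminate.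
  simpl length. replace (S (S (length l)) - 1) with (S (S (length l) - 1)) by lia. reflexivity.
Qed.

Lemma nthcond_cyc {G : Grp} (w : list (bool * G)) : w <> [] -> (nthcond w <-> cyc w).
Proof.
  intro Hw. assert (Hlen: 0 < length w) by (destruct w; simpl; [congruence|lia]).
  unfold nthcond, cyc. rewrite (chain_nth w (true, gone)). split.
  - intros H. split.
    + intros i Hi Hj. apply H. lia. rewrite Nat.mod_small by lia.
      replace (i+1) with (S i) by lia. exact Hj.
    + intros p0 r E Hj. rewrite (last_indep _ _ (true, gone)) in Hj by auto.
      rewrite (last_indep _ _ (true, gone)) by auto.
      rewrite <- nth_last_eq in * by auto.
      apply H. lia. replace (length w - 1 + 1) with (length w) by lia.
      rewrite Nat.Div0.mod_same by lia.
      replace (nth 0 w (true, gone)) with p0 by (rewrite E; reflexivity). exact Hj.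
  - intros [H1 H2] i Hi.
    destruct (Nat.eq_dec (S i) (length w)) as [E|E].
    + replace ((i+1) mod length w) with 0.
      2:{ replace (i+1) with (length w) by lia. rewrite Nat.Div0.mod_same; lia. }
      destruct w as [|p0 r]; [congruence|].
      specialize (H2 p0 r eq_refl).
      rewrite (last_indep _ _ (true, gone)) in H2 by auto.
      rewrite <- nth_last_eq in H2 by auto.
      replace (length (p0 :: r) - 1) with i in H2 by lia. exact H2.
    + rewrite Nat.mod_small by lia. replace (i+1) with (S i) by lia. apply H1. lia.
Qed.

Lemma Forall_nthD {G : Grp} (D : G -> Prop) (w : list (bool * G)) :
  Forall (fun p => D (snd p)) w <-> (forall i, i < length w -> D (snd (nth i w (true, gone)))).
Proof.
  rewrite Forall_nth. split.
  - intros H i Hi. apply H; auto.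
  - intros H i d Hi. rewrite (nth_indep w d (true, gone)) by auto. apply H; auto.
Qed.

Lemma chain_app {G : Grp} (u : list (bool * G)) q v :
  u <> [] -> (chain (u ++ q :: v) <-> chain u /\ chain (q :: v) /\ Jn (last u q) q).
Proof.
  induction u as [|p u IH]; intro Hu; [congruence|].
  destruct u as [|p' u].
  - simpl. tauto.
  - change ((p :: p' :: u) ++ q :: v) with (p :: ((p' :: u) ++ q :: v)).
    change (last (p :: p' :: u) q) with (last (p' :: u) q).
    simpl chain at 1. rewrite IH by discriminate.
    change (chain (p :: p' :: u)) with (Jn p p' /\ chain (p' :: u)). tauto.
Qed.

Lemma chain_snoc_indep {G : Grp} (u : list (bool * G)) e d d' :
  chain (u ++ [(e,d)]) -> chain (u ++ [(e,d')]).
Proof.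
  destruct u as [|p u]; [simpl; auto|].
  intros H. apply chain_app in H; [|discriminate]. apply chain_app; [discriminate|].
  destruct H as [H1 [H2 H3]]. split; [auto|split; [simpl; auto|]].
  rewrite (last_indep _ _ (e,d)) by discriminate. unfold Jn in *; simpl in *. exact H3.
Qed.

Lemma chain_prefix {G : Grp} (u v : list (bool * G)) : chain (u ++ v) -> chain u.
Proof.
  destruct u as [|p u]; [simpl; auto|]. destruct v as [|q v]; [rewrite app_nil_r; auto|].
  rewrite chain_app by discriminate. tauto.
Qed.

Lemma chain_suffix {G : Grp} (u v : list (bool * G)) : chain (u ++ v) -> chain v.
Proof.
  induction u as [|p u IH]; simpl; auto. intro H. apply IH. apply (chain_tl p). exact H.
Qed.

Lemma cyc_rot {G : Grp} (u v : list (bool * G)) : u <> [] -> v <> [] -> cyc (u ++ v) -> cyc (v ++ u).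
Proof.
  intros Hu Hv [Hc Hl]. destruct u as [|p0 u']; [congruence|]. destruct v as [|q0 v']; [congruence|].
  rewrite chain_app in Hc by discriminate. destruct Hc as [Cu [Cv J]].
  specialize (Hl p0 (u' ++ q0 :: v') eq_refl).
  rewrite last_app_cons in Hl.
  split.
  - rewrite chain_app by discriminate. refine (conj Cv (conj Cu _)).
    exact Hl.
  - intros p r E. injection E as <- _.
    rewrite last_app_cons. exact J.
Qed.

Lemma below_le n a b : below n a -> b <= a -> below n b.
Proof. destruct n; simpl; auto; lia. Qed.

Lemma below_small n (Hn : forall m, n = Some m -> 2 <= m) a : a <= 1 -> below n a.
Proof. destruct n as [m|]; simpl; auto. intro. specialize (Hn m eq_refl). lia. Qed.

Definition cntq {G : Grp} (q : bool -> bool) (w : list (bool * G)) :=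
  length (filter (fun p => q (fst p)) w).

Lemma cntq_app {G : Grp} q (u v : list (bool * G)) : cntq q (u ++ v) = cntq q u + cntq q v.
Proof. unfold cntq. rewrite filter_app, length_app. reflexivity. Qed.

Lemma cntq_cons {G : Grp} q (p : bool * G) w :
  cntq q (p :: w) = (if q (fst p) then 1 else 0) + cntq q w.
Proof. unfold cntq. simpl. destruct (q (fst p)); reflexivity. Qed.

Lemma cntq_snoc {G : Grp} q (u : list (bool * G)) e d d' :
  cntq q (u ++ [(e,d)]) = cntq q (u ++ [(e,d')]).
Proof. rewrite !cntq_app. unfold cntq; simpl. destruct (q e); reflexivity. Qed.

Definition counts_ok {G : Grp} (n : option nat) (w : list (bool * G)) :=
  below n (cntq (fun b => b) w) /\ below n (cntq negb w).

Lemma counts_ok_le {G : Grp} n (w w' : list (bool * G)) :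
  cntq (fun b => b) w' <= cntq (fun b => b) w -> cntq negb w' <= cntq negb w ->
  counts_ok n w -> counts_ok n w'.
Proof. intros H1 H2 [A1 A2]. split; [exact (below_le _ _ _ A1 H1)|exact (below_le _ _ _ A2 H2)]. Qed.

Lemma nRF_use (G : Grp) (D : G -> Prop) n x :
  nRF_rel G D n x -> forall w, w <> [] -> Forall (fun p => D (snd p)) w -> cyc w -> counts_ok n w ->
  word_eval x w <> gone.
Proof.
  intros H w Hw HD Hc [C1 C2]. apply H; auto.
  - apply Forall_nthD; auto.
  - apply nthcond_cyc; auto.
Qed.

Lemma nRF_intro (G : Grp) (D : G -> Prop) n x :
  (forall w, w <> [] -> Forall (fun p => D (snd p)) w -> cyc w -> counts_ok n w ->
  word_eval x w <> gone) -> nRF_rel G D n x.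
Proof.
  intros H w Hw HD Hc C1 C2. apply H; auto.
  - apply Forall_nthD; auto.
  - apply nthcond_cyc; auto.
  - split; auto.
Qed.

Lemma block_notin (G : Grp) (D : G -> Prop) n : subgrp D -> nRF_pair G D n ->
  forall x, ~ D x -> forall w, w <> [] -> Forall (fun p => D (snd p)) w -> chain w ->
  counts_ok n w -> ~ D (word_eval x w).
Proof.
  intros [D1 [DM DV]] HRF x Hx w.
  remember (length w) as L eqn:HL. revert w HL.
  induction L as [L IH] using lt_wf_ind. intros w HL Hw HD Hch Hcnt Dv.
  set (delta := word_eval x w) in *.
  destruct (exists_last Hw) as [w0 [[em dm] Ew]].
  set (ws := w0 ++ [(em, dm ** ginv delta)]).
  assert (Vs : word_eval x ws = gone).
  { unfold ws. rewrite <- word_eval_snoc. rewrite <- Ew. fold delta. apply mVr. }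
  assert (HDs : Forall (fun p => D (snd p)) ws).
  { unfold ws. rewrite Ew in HD. apply Forall_app in HD. destruct HD as [HD1 HD2].
    apply Forall_app. split; auto. inversion HD2; subst. constructor; auto. simpl in *. auto. }
  assert (Hchs : chain ws). { unfold ws. apply chain_snoc_indep with dm. rewrite <- Ew. auto. }
  assert (Hcnts : counts_ok n ws).
  { unfold ws, counts_ok. rewrite <- (cntq_snoc (fun b => b) w0 em dm), <- (cntq_snoc negb w0 em dm). rewrite <- Ew. exact Hcnt. }
  destruct w0 as [|[e1 d1] w1].
  -
    apply (nRF_use G D n x (HRF x Hx) ws); auto. unfold ws; simpl; discriminate.
    split; auto. intros p0 r E. simpl in E. injection E as <- _. simpl. unfold Jn. simpl.
    destruct em; simpl; discriminate.
  - destruct (classic (em = negb e1 /\ dm ** ginv delta = gone)) as [[Ee Ed]|NE].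
    +
      assert (V0 : word_eval x ((e1, d1) :: w1 ++ [(em, gone)]) = gone).
      { pose proof Vs as V1. unfold ws in V1. rewrite Ed in V1. exact V1. }
      rewrite word_eval_cons, word_eval_app in V0. simpl in V0.
      rewrite Ee, gpow_neg, !m1r in V0.
      rewrite !mA in V0. rewrite <- (mA (gpow e1 x) d1) in V0.
      apply conj_eq1 in V0.
      destruct w1 as [|p w1'].
      * simpl in V0. rewrite m1r in V0.
        rewrite Ew in Hch. simpl in Hch. destruct Hch as [J _]. apply J; auto.
        simpl. rewrite Ee. destruct e1; reflexivity.
      * apply mul_eq1 in V0.
        apply (IH (length (p :: w1')) ) with (w := p :: w1'); auto.
        -- rewrite HL, Ew. simpl. rewrite length_app. simpl. lia.
        -- discriminate.
        -- rewrite Ew in HD. simpl in HD. apply Forall_inv_tail in HD.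
           rewrite app_comm_cons in HD. apply Forall_app in HD. tauto.
        -- rewrite Ew in Hch. simpl app in Hch. apply chain_tl in Hch. rewrite app_comm_cons in Hch. apply chain_prefix in Hch. exact Hch.
        -- apply counts_ok_le with w; auto; rewrite Ew; simpl app; rewrite !cntq_cons, !cntq_app;
           simpl; lia.
        -- rewrite <- (invK (word_eval x (p :: w1'))), <- V0. apply DV. rewrite Ew in HD. apply Forall_inv in HD. exact HD.
    + apply (nRF_use G D n x (HRF x Hx) ws); auto. unfold ws; simpl; discriminate.
      split; auto. intros p0 r E. unfold ws in E. simpl in E. injection E as <- _.
      unfold ws. rewrite last_app_cons. unfold Jn. simpl.
      intros Hj Hd. apply NE. split; auto.
Qed.

Lemma malnormal (G : Grp) (D : G -> Prop) n (Hn : forall m, n = Some m -> 2 <= m) :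
  nRF_pair G D n -> subgrp D -> forall b d, ~ D b -> D d -> d <> gone -> ~ D (b ** d ** ginv b).
Proof.
  intros HRF [D1 [DM DV]] b d Hb Hd Hd1 Hc.
  apply (nRF_use G D n b (HRF b Hb) [(true, d); (false, ginv (b ** d ** ginv b))]).
  - discriminate.
  - repeat constructor; simpl; auto.
  - split.
    + simpl. split; auto. unfold Jn; simpl. intros _ ; auto.
    + intros p0 r E. injection E as <- _. simpl. unfold Jn; simpl. intros _ E.
      apply inv_eq1 in E. apply conj_eq1 in E. auto.
  - split; apply below_small; auto; unfold cntq; simpl; lia.
  - simpl. rewrite m1r, !mA. apply mVr.
Qed.

Lemma pullback {A B : Type} (h : A -> B) (Q : A -> Prop) (w : list (bool * B)) :
  Forall (fun p => exists a, snd p = h a /\ Q a) w ->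
  exists wA, w = mapc h wA /\ Forall (fun p => Q (snd p)) wA.
Proof.
  induction w as [|[e d] w IH]; intro H.
  - exists []. split; auto.
  - inversion H as [|? ? [a [Ea Qa]] Hw]; subst. destruct (IH Hw) as [wA [E F]].
    exists ((e, a) :: wA). simpl in *. subst. split; auto.
Qed.

Lemma chain_mapc (A B : Grp) (h : A -> B) (H1 : h gone = gone) (w : list (bool * A)) :
  chain (mapc h w) -> chain w.
Proof.
  induction w as [|p w IH]; [simpl; auto|].
  destruct w as [|p' w]; [simpl; auto|].
  intros [J C]. split; [|apply IH; exact C]. unfold Jn in *. simpl in *. intros E Hd. apply J; auto.
  rewrite Hd. auto.
Qed.

Lemma last_mapc {A B : Type} (h : A -> B) (w : list (bool * A)) d :
  last (mapc h w) (fst d, h (snd d)) = (fst (last w d), h (snd (last w d))).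
Proof.
  induction w as [|p w IH]; simpl; auto.
  destruct w as [|p' w]; simpl; auto.
Qed.

Lemma cyc_mapc (A B : Grp) (h : A -> B) (H1 : h gone = gone) (w : list (bool * A)) :
  cyc (mapc h w) -> cyc w.
Proof.
  intros [C L]. split. apply (chain_mapc A B h H1); auto.
  intros p0 r E. subst w. specialize (L _ _ eq_refl).
  rewrite last_mapc in L. unfold Jn in *. simpl in *. intros E Hd. apply L; auto.
  rewrite Hd. auto.
Qed.

Lemma cntq_mapc {A B : Grp} (h : A -> B) q (w : list (bool * A)) : cntq q (mapc h w) = cntq q w.
Proof. unfold cntq. apply filter_mapc. Qed.

Lemma counts_mapc {A B : Grp} (h : A -> B) n (w : list (bool * A)) : counts_ok n (mapc h w) -> counts_ok n w.
Proof. unfold counts_ok. rewrite !cntq_mapc. auto. Qed.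

Lemma Forall_mono_snd {G : Grp} (D D' : G -> Prop) (w : list (bool * G)) :
  (forall x, D x -> D' x) -> Forall (fun p => D (snd p)) w -> Forall (fun p => D' (snd p)) w.
Proof. intros H F. eapply Forall_impl; [|exact F]. intros; auto. Qed.

Lemma nRF_trans (G H C : Grp) (phi : H -> G) (alpha : C -> H) n :
  is_hom H G phi -> injective phi ->
  nRF_pair G (image phi) n -> nRF_pair H (image alpha) n ->
  nRF_pair G (image (fun c => phi (alpha c))) n.
Proof.
  intros Hp Ip RG RH x Hx. apply nRF_intro. intros w Hw HD Hc Hcnt.
  destruct (classic (image phi x)) as [[h Eh]|Nx].
  - subst x. assert (Nh : ~ image alpha h).
    { intros [c Ec]. apply Hx. exists c. subst. reflexivity. }
    destruct (pullback phi (image alpha) w) as [wH [Ew FH]].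
    { eapply Forall_impl; [|exact HD]. intros [e d] [c Ec]. simpl in *.
      exists (alpha c). split; auto. exists c; auto. }
    subst w. rewrite word_eval_hom by auto. intro E.
    rewrite <- (hom1 _ _ phi Hp) in E. apply Ip in E. revert E.
    apply (nRF_use H _ n h (RH h Nh) wH); auto.
    + intro. subst. simpl in Hw. congruence.
    + apply (cyc_mapc H G phi (hom1 _ _ phi Hp)); auto.
    + apply (counts_mapc phi); auto.
  - apply (nRF_use G _ n x (RG x Nx) w); auto.
    refine (Forall_mono_snd _ (image phi) w _ HD). intros y [c ->]. exists (alpha c). reflexivity.
Qed.

Lemma sig_ext {T : Type} {Q : T -> Prop} (x y : {t | Q t}) : proj1_sig x = proj1_sig y -> x = y.
Proof. destruct x as [x qx], y as [y qy]; simpl. intros ->. f_equal. apply proof_irrelevance. Qed.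

Section Transversal.
Variables (X C : Grp) (h : C -> X).
Hypothesis Hh : is_hom C X h.
Hypothesis Ih : injective h.

Definition QR (y r : X) : Prop := (exists c, r = h c ** y) /\ (image h y -> r = gone).
Definition rep (y : X) : X := epsilon (inhabits gone) (QR y).

Lemma QR_ex y : exists r, QR y r.
Proof.
  destruct (classic (image h y)) as [[c0 E]|N].
  - exists gone. split; auto. exists (ginv c0). rewrite E, (homV _ _ h Hh), mVl. reflexivity.
  - exists y. split. exists gone. rewrite (hom1 _ _ h Hh), m1l. reflexivity. intro; contradiction.
Qed.
Lemma rep_spec y : QR y (rep y).
Proof. unfold rep. apply epsilon_spec, QR_ex. Qed.
Lemma rep_C y : image h y -> rep y = gone.
Proof. apply rep_spec. Qed.
Lemma rep_coset y : exists c, rep y = h c ** y.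
Proof. apply rep_spec. Qed.
Lemma QR_shift c y : QR (h c ** y) = QR y.
Proof.
  extensionality r. apply propositional_extensionality. unfold QR. split.
  - intros [[c1 E1] H2]. split.
    + exists (c1 ** c). rewrite Hh, <- mA. exact E1.
    + intros [c0 E0]. apply H2. exists (c ** c0). rewrite Hh, E0. reflexivity.
  - intros [[c1 E1] H2]. split.
    + exists (c1 ** ginv c). rewrite Hh, (homV _ _ h Hh), mA, mKr'. exact E1.
    + intros [c0 E0]. apply H2. exists (ginv c ** c0). rewrite Hh, <- E0, (homV _ _ h Hh), mKl. reflexivity.
Qed.
Lemma rep_shift c y : rep (h c ** y) = rep y.
Proof. unfold rep. rewrite QR_shift. reflexivity. Qed.
Lemma rep_idem y : rep (rep y) = rep y.
Proof. destruct (rep_coset y) as [c E]. transitivity (rep (h c ** y)); [f_equal; exact E| apply rep_shift]. Qed.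
Lemma rep_notC y : ~ image h y -> ~ image h (rep y).
Proof.
  intros N [c' E]. destruct (rep_coset y) as [c E2]. apply N. exists (ginv c ** c').
  rewrite Hh, <- E, E2, (homV _ _ h Hh), mKl. reflexivity.
Qed.
Definition cf (y : X) : C := epsilon (inhabits gone) (fun c => y = h c ** rep y).
Lemma cf_spec y : y = h (cf y) ** rep y.
Proof.
  unfold cf. apply (epsilon_spec (inhabits (@gone C)) (fun c => y = h c ** rep y)).
  destruct (rep_coset y) as [c E]. exists (ginv c). rewrite E, (homV _ _ h Hh), mKl. reflexivity.
Qed.
Lemma cf_eq c y : y = h c ** rep y -> cf y = c.
Proof. intro E. apply Ih. apply (mcanr (rep y)). rewrite <- cf_spec. auto. Qed.
Lemma notC_mul c y : ~ image h y -> ~ image h (h c ** y).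
Proof. intros N [c' E]. apply N. exists (ginv c ** c'). rewrite Hh, <- E, (homV _ _ h Hh), mKl. reflexivity. Qed.
Lemma notC_mul_r y c : ~ image h y -> ~ image h (y ** h c).
Proof. intros N [c' E]. apply N. exists (c' ** ginv c). rewrite Hh, <- E, (homV _ _ h Hh), mKr. reflexivity. Qed.
Lemma notC_inv y : ~ image h y -> ~ image h (ginv y).
Proof. intros N [c' E]. apply N. exists (ginv c'). rewrite (homV _ _ h Hh), <- E, invK. reflexivity. Qed.
End Transversal.

Section Red.
Variables (A B C P : Grp) (f : C -> A) (g : C -> B) (iA : A -> P) (iB : B -> P).
Inductive R : bool -> bool -> nat -> P -> Prop :=
| R1A a : ~ image f a -> R true true 1 (iA a)
| R1B b : ~ image g b -> R false false 1 (iB b)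
| RcA a en k y : ~ image f a -> R false en k y -> R true en (S k) (iA a ** y)
| RcB b en k y : ~ image g b -> R true en k y -> R false en (S k) (iB b ** y).
End Red.

Lemma R_swap A B C P f g iA iB st en k y :
  R A B C P f g iA iB st en k y -> R B A C P g f iB iA (negb st) (negb en) k y.
Proof. induction 1; simpl; constructor; auto. Qed.

Lemma R_swap' A B C P f g iA iB st en k y :
  R B A C P g f iB iA (negb st) (negb en) k y -> R A B C P f g iA iB st en k y.
Proof.
  intro H. apply R_swap in H. rewrite !Bool.negb_involutive in H. exact H.
Qed.

Lemma R_pos A B C P f g iA iB st en k y : R A B C P f g iA iB st en k y -> 1 <= k.
Proof. induction 1; lia. Qed.

Record perm (T : Type) := mkPerm { pf : T -> T; pb : T -> T;
   pfb : forall x, pf (pb x) = x; pbf : forall x, pb (pf x) = x }.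
Arguments pf {T}. Arguments pb {T}.

Lemma perm_ext T (p q : perm T) : (forall x, pf p x = pf q x) -> p = q.
Proof.
  destruct p as [f1 b1 fb1 bf1], q as [f2 b2 fb2 bf2]; simpl. intro H.
  assert (f1 = f2) by (extensionality x; auto). subst f2.
  assert (b1 = b2). { extensionality x. rewrite <- (fb2 x) at 1. rewrite bf1. reflexivity. }
  subst b2. f_equal; apply proof_irrelevance.
Qed.

Definition pcomp T (p q : perm T) : perm T.
Proof.
  refine (mkPerm T (fun x => pf p (pf q x)) (fun x => pb q (pb p x)) _ _).
  - intro x. rewrite pfb, pfb. reflexivity.
  - intro x. rewrite pbf, pbf. reflexivity.
Defined.
Definition pid T : perm T := mkPerm T (fun x => x) (fun x => x) (fun x => eq_refl) (fun x => eq_refl).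
Definition pinv T (p : perm T) : perm T := mkPerm T (pb p) (pf p) (pbf T p) (pfb T p).

Definition PermG (T : Type) : Grp.
Proof.
  refine {| gcar := perm T; gmul := pcomp T; gone := pid T; ginv := pinv T |}.
  - intros x y z. apply perm_ext. intros; reflexivity.
  - intros x. apply perm_ext. intros; reflexivity.
  - intros x. apply perm_ext. intros; simpl. apply pbf.
Defined.

Section NF.
Variables (A B C P : Grp) (f : C -> A) (g : C -> B) (iA : A -> P) (iB : B -> P).
Hypotheses (Hf : is_hom C A f) (Hg : is_hom C B g) (If : injective f) (Ig : injective g).
Hypothesis Ham : is_amalgam C A B P f g iA iB.

Notation repA := (rep A C f).
Notation repB := (rep B C g).
Notation cfA := (cf A C f).
Notation cfB := (cf B C g).

Definition okSyl (t : A + B) : Prop := match t with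
 | inl a => repA a = a /\ ~ image f a
 | inr b => repB b = b /\ ~ image g b end.
Definition sideA (t : A + B) : bool := match t with inl _ => true | inr _ => false end.
Fixpoint altv (ts : list (A + B)) : Prop := match ts with
 | [] => True
 | t :: r => match r with [] => True | t' :: _ => sideA t <> sideA t' /\ altv r end end.
Definition validts (ts : list (A + B)) := altv ts /\ Forall okSyl ts.
Definition Om := { p : C * list (A + B) | validts (snd p) }.

Definition noInl (r : list (A + B)) := match r with inl _ :: _ => False | _ => True end.
Definition noInr (r : list (A + B)) := match r with inr _ :: _ => False | _ => True end.

Definition splitA (ts : list (A + B)) : A * list (A + B) :=
  match ts with inl t :: r => (t, r) | _ => (gone, ts) end.
Definition splitB (ts : list (A + B)) : B * list (A + B) :=
  match ts with inr t :: r => (t, r) | _ => (gone, ts) end.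

Definition mkA (y : A) (r : list (A + B)) : C * list (A + B) :=
  (cfA y, if excluded_middle_informative (image f y) then r else inl (repA y) :: r).
Definition mkB (y : B) (r : list (A + B)) : C * list (A + B) :=
  (cfB y, if excluded_middle_informative (image g y) then r else inr (repB y) :: r).

Definition actA (a : A) (p : C * list (A + B)) : C * list (A + B) :=
  mkA (a ** f (fst p) ** fst (splitA (snd p))) (snd (splitA (snd p))).
Definition actB (b : B) (p : C * list (A + B)) : C * list (A + B) :=
  mkB (b ** g (fst p) ** fst (splitB (snd p))) (snd (splitB (snd p))).

Lemma splitA_noInl r : noInl r -> splitA r = (gone, r).
Proof. destruct r as [|[a|b] r]; simpl; tauto. Qed.
Lemma splitB_noInr r : noInr r -> splitB r = (gone, r).
Proof. destruct r as [|[a|b] r]; simpl; tauto. Qed.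

Lemma splitA_valid ts : validts ts ->
  noInl (snd (splitA ts)) /\ validts (snd (splitA ts)) /\
  (forall t r, ts = inl t :: r -> okSyl (inl t)).
Proof.
  intros [Al Fo]. destruct ts as [|[a|b] r]; simpl.
  - split; [exact I|split; [split; auto|intros; discriminate]].
  - inversion Fo; subst. destruct r as [|[a'|b'] r']; simpl in Al.
    + split; [exact I|split; [split; auto|]]. intros t r E; injection E as <- <-; auto.
    + destruct Al as [Ne _]. simpl in Ne. congruence.
    + split; [exact I|split; [split; tauto|]]. intros t r E; injection E as <- <-; auto.
  - split; [exact I|split; [split; auto|intros; discriminate]].
Qed.

Lemma splitB_valid ts : validts ts ->
  noInr (snd (splitB ts)) /\ validts (snd (splitB ts)) /\
  (forall t r, ts = inr t :: r -> okSyl (inr t)).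
Proof.
  intros [Al Fo]. destruct ts as [|[a|b] r]; simpl.
  - split; [exact I|split; [split; auto|intros; discriminate]].
  - split; [exact I|split; [split; auto|intros; discriminate]].
  - inversion Fo; subst. destruct r as [|[a'|b'] r']; simpl in Al.
    + split; [exact I|split; [split; auto|]]. intros t r E; injection E as <- <-; auto.
    + split; [exact I|split; [split; tauto|]]. intros t r E; injection E as <- <-; auto.
    + destruct Al as [Ne _]. simpl in Ne. congruence.
Qed.

Lemma mkA_valid y r : noInl r -> validts r -> validts (snd (mkA y r)).
Proof.
  intros N [Al Fo]. unfold mkA. simpl. destruct (excluded_middle_informative (image f y)) as [I|NI].
  - split; auto.
  - split.
    + simpl. destruct r as [|[a|b] r']; simpl in *; [auto|contradiction|split; [discriminate|exact Al]].
    + constructor; auto. simpl. split. apply rep_idem; auto. apply rep_notC; auto.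
Qed.
Lemma mkB_valid y r : noInr r -> validts r -> validts (snd (mkB y r)).
Proof.
  intros N [Al Fo]. unfold mkB. simpl. destruct (excluded_middle_informative (image g y)) as [I|NI].
  - split; auto.
  - split.
    + simpl. destruct r as [|[a|b] r']; simpl in *; [auto|split; [discriminate|exact Al]|contradiction].
    + constructor; auto. simpl. split. apply rep_idem; auto. apply rep_notC; auto.
Qed.

Lemma actA_valid a p : validts (snd p) -> validts (snd (actA a p)).
Proof. intro V. destruct (splitA_valid _ V) as [N [V2 _]]. apply mkA_valid; auto. Qed.
Lemma actB_valid b p : validts (snd p) -> validts (snd (actB b p)).
Proof. intro V. destruct (splitB_valid _ V) as [N [V2 _]]. apply mkB_valid; auto. Qed.

Lemma split_mkA y r : noInl r -> splitA (snd (mkA y r)) = (repA y, r) /\ fst (mkA y r) = cfA y.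
Proof.
  intro N. unfold mkA; simpl. split; auto.
  destruct (excluded_middle_informative (image f y)) as [I|NI]; simpl; auto.
  rewrite splitA_noInl by auto. rewrite rep_C; auto.
Qed.
Lemma split_mkB y r : noInr r -> splitB (snd (mkB y r)) = (repB y, r) /\ fst (mkB y r) = cfB y.
Proof.
  intro N. unfold mkB; simpl. split; auto.
  destruct (excluded_middle_informative (image g y)) as [I|NI]; simpl; auto.
  rewrite splitB_noInr by auto. rewrite rep_C; auto.
Qed.

Lemma actA_mul a1 a2 p : validts (snd p) -> actA a1 (actA a2 p) = actA (a1 ** a2) p.
Proof.
  intro V. destruct (splitA_valid _ V) as [N _].
  unfold actA at 1 2. destruct (split_mkA (a2 ** f (fst p) ** fst (splitA (snd p))) _ N) as [E1 E2].
  unfold actA. rewrite E1, E2. simpl. f_equal.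
  rewrite <- mA, <- (cf_spec A C f Hf). rewrite !mA. reflexivity.
Qed.
Lemma actB_mul b1 b2 p : validts (snd p) -> actB b1 (actB b2 p) = actB (b1 ** b2) p.
Proof.
  intro V. destruct (splitB_valid _ V) as [N _].
  unfold actB at 1 2. destruct (split_mkB (b2 ** g (fst p) ** fst (splitB (snd p))) _ N) as [E1 E2].
  unfold actB. rewrite E1, E2. simpl. f_equal.
  rewrite <- mA, <- (cf_spec B C g Hg). rewrite !mA. reflexivity.
Qed.

Lemma actA_C c0 p : validts (snd p) -> actA (f c0) p = (c0 ** fst p, snd p).
Proof.
  intro V. destruct (splitA_valid _ V) as [N [_ Ok]]. destruct p as [c ts]. unfold actA, mkA. simpl in *.
  destruct ts as [|[t|t] r] eqn:Ets; simpl.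
  - rewrite m1r, <- Hf. destruct (excluded_middle_informative _) as [I|NI].
    + f_equal. apply cf_eq; auto. rewrite rep_C; auto. rewrite m1r; auto.
    + exfalso. apply NI. eexists; eauto.
  - destruct (Ok t r eq_refl) as [Rt Nt]. rewrite <- Hf.
    destruct (excluded_middle_informative _) as [I|NI].
    + exfalso. apply (notC_mul A C f Hf (c0 ** c) t Nt I).
    + rewrite rep_shift by auto. rewrite Rt. f_equal. apply cf_eq; auto. rewrite rep_shift, Rt; auto.
  - rewrite m1r, <- Hf. destruct (excluded_middle_informative _) as [I|NI].
    + f_equal. apply cf_eq; auto. rewrite rep_C; auto. rewrite m1r; auto.
    + exfalso. apply NI. eexists; eauto.
Qed.
Lemma actB_C c0 p : validts (snd p) -> actB (g c0) p = (c0 ** fst p, snd p).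
Proof.
  intro V. destruct (splitB_valid _ V) as [N [_ Ok]]. destruct p as [c ts]. unfold actB, mkB. simpl in *.
  destruct ts as [|[t|t] r] eqn:Ets; simpl.
  - rewrite m1r, <- Hg. destruct (excluded_middle_informative _) as [I|NI].
    + f_equal. apply cf_eq; auto. rewrite rep_C; auto. rewrite m1r; auto.
    + exfalso. apply NI. eexists; eauto.
  - rewrite m1r, <- Hg. destruct (excluded_middle_informative _) as [I|NI].
    + f_equal. apply cf_eq; auto. rewrite rep_C; auto. rewrite m1r; auto.
    + exfalso. apply NI. eexists; eauto.
  - destruct (Ok t r eq_refl) as [Rt Nt]. rewrite <- Hg.
    destruct (excluded_middle_informative _) as [I|NI].
    + exfalso. apply (notC_mul B C g Hg (c0 ** c) t Nt I).
    + rewrite rep_shift by auto. rewrite Rt. f_equal. apply cf_eq; auto. rewrite rep_shift, Rt; auto.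
Qed.

Lemma actA_one p : validts (snd p) -> actA gone p = p.
Proof.
  intro V. rewrite <- (hom1 _ _ f Hf). rewrite actA_C by auto. rewrite m1l. destruct p; reflexivity.
Qed.
Lemma actB_one p : validts (snd p) -> actB gone p = p.
Proof.
  intro V. rewrite <- (hom1 _ _ g Hg). rewrite actB_C by auto. rewrite m1l. destruct p; reflexivity.
Qed.

Definition liftA (a : A) (w : Om) : Om := exist _ (actA a (proj1_sig w)) (actA_valid a _ (proj2_sig w)).
Definition liftB (b : B) (w : Om) : Om := exist _ (actB b (proj1_sig w)) (actB_valid b _ (proj2_sig w)).

Definition hAp (a : A) : perm Om.
Proof.
  refine (mkPerm Om (liftA a) (liftA (ginv a)) _ _); intro w; apply sig_ext; simpl;
    rewrite actA_mul by (apply proj2_sig || apply actA_valid, proj2_sig).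
  - rewrite mVr. apply actA_one, proj2_sig.
  - rewrite mVl. apply actA_one, proj2_sig.
Defined.
Definition hBp (b : B) : perm Om.
Proof.
  refine (mkPerm Om (liftB b) (liftB (ginv b)) _ _); intro w; apply sig_ext; simpl;
    rewrite actB_mul by (apply proj2_sig || apply actB_valid, proj2_sig).
  - rewrite mVr. apply actB_one, proj2_sig.
  - rewrite mVl. apply actB_one, proj2_sig.
Defined.

Definition K := PermG Om.

Lemma hAp_hom : is_hom A K hAp.
Proof. intros x y. apply perm_ext. intro w. apply sig_ext. simpl. rewrite actA_mul; auto. apply proj2_sig. Qed.
Lemma hBp_hom : is_hom B K hBp.
Proof. intros x y. apply perm_ext. intro w. apply sig_ext. simpl. rewrite actB_mul; auto. apply proj2_sig. Qed.
Lemma hp_agree c : hAp (f c) = hBp (g c).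
Proof.
  apply perm_ext. intro w. apply sig_ext. simpl. rewrite actA_C, actB_C; auto; apply proj2_sig.
Qed.

Lemma valid0 : validts [].
Proof. split; simpl; auto. Qed.
Definition om0 : Om := exist (fun p => validts (snd p)) (gone, []) valid0.

Definition headside (ts : list (A + B)) : option bool :=
  match ts with inl _ :: _ => Some true | inr _ :: _ => Some false | [] => None end.

Lemma exists_h : exists h : P -> K, is_hom P K h /\ (forall a, h (iA a) = hAp a) /\ (forall b, h (iB b) = hBp b).
Proof.
  destruct Ham as [_ [_ [_ U]]]. destruct (U K hAp hBp hAp_hom hBp_hom hp_agree) as [Ex _]. exact Ex.
Qed.

Lemma R_action (h : P -> K) : is_hom P K h -> (forall a, h (iA a) = hAp a) -> (forall b, h (iB b) = hBp b) ->
  forall st en k y, R A B C P f g iA iB st en k y ->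
  length (snd (proj1_sig (pf (h y) om0))) = k /\ headside (snd (proj1_sig (pf (h y) om0))) = Some st.
Proof.
  intros Hh HA HB st en k y HR. induction HR as [a Na|b Nb|a en k y Na HR IH|b en k y Nb HR IH].
  - rewrite HA. simpl. unfold actA, mkA. simpl.
    destruct (excluded_middle_informative _) as [I|NI]; simpl; auto.
    exfalso. apply Na. rewrite (hom1 _ _ f Hf), !m1r in I. exact I.
  - rewrite HB. simpl. unfold actB, mkB. simpl.
    destruct (excluded_middle_informative _) as [I|NI]; simpl; auto.
    exfalso. apply Nb. rewrite (hom1 _ _ g Hg), !m1r in I. exact I.
  - rewrite Hh, HA. simpl. destruct (pf (h y) om0) as [[c ts] V]. simpl in *.
    destruct IH as [L Hs]. destruct ts as [|[t|t] r]; simpl in Hs; try discriminate.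
    unfold actA, mkA. simpl. destruct (excluded_middle_informative _) as [I|NI]; simpl; auto.
    exfalso. rewrite m1r in I. apply (notC_mul_r A C f Hf a c Na I).
  - rewrite Hh, HB. simpl. destruct (pf (h y) om0) as [[c ts] V]. simpl in *.
    destruct IH as [L Hs]. destruct ts as [|[t|t] r]; simpl in Hs; try discriminate.
    unfold actB, mkB. simpl. destruct (excluded_middle_informative _) as [I|NI]; simpl; auto.
    exfalso. rewrite m1r in I. apply (notC_mul_r B C g Hg b c Nb I).
Qed.

Theorem NF st en k y : R A B C P f g iA iB st en k y -> y <> gone.
Proof.
  intros HR E. destruct exists_h as [h [Hh [HA HB]]].
  destruct (R_action h Hh HA HB _ _ _ _ HR) as [L _].
  apply R_pos in HR. subst y. rewrite (hom1 _ _ h Hh) in L. simpl in L. lia.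
Qed.

Lemma mkA_inj y1 y2 : mkA y1 [] = mkA y2 [] -> y1 = y2.
Proof.
  unfold mkA. intro E. injection E as Ec El.
  rewrite (cf_spec A C f Hf y1), (cf_spec A C f Hf y2), Ec.
  destruct (excluded_middle_informative (image f y1)), (excluded_middle_informative (image f y2));
    try discriminate.
  - rewrite !rep_C; auto.
  - injection El as ->. reflexivity.
Qed.

Theorem iA_inj : injective iA.
Proof.
  intros a1 a2 E. destruct exists_h as [h [Hh [HA HB]]].
  apply (f_equal h) in E. rewrite !HA in E.
  apply (f_equal (fun p => proj1_sig (pf p om0))) in E. simpl in E.
  unfold actA in E. simpl in E. rewrite (hom1 _ _ f Hf), !m1r in E. apply mkA_inj. exact E.
Qed.

End NF.

Lemma amalgam_swap C A B P f g iA iB :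
  is_amalgam C A B P f g iA iB -> is_amalgam C B A P g f iB iA.
Proof.
  intros [HA [HB [Hc U]]]. split; [auto|split; [auto|split]].
  - intro c. symmetry. auto.
  - intros K hB hA HhB HhA Hc'.
    destruct (U K hA hB HhA HhB (fun c => eq_sym (Hc' c))) as [[h [Hh [E1 E2]]] Un].
    split.
    + exists h. auto.
    + intros h1 h2 H1 F1 G1 H2 F2 G2. apply (Un h1 h2); auto.
Qed.

Lemma R_concat A B C P f g iA iB s1 e1 k1 y1 s2 e2 k2 y2 :
  R A B C P f g iA iB s1 e1 k1 y1 -> R A B C P f g iA iB s2 e2 k2 y2 -> e1 = negb s2 ->
  R A B C P f g iA iB s1 e2 (k1 + k2) (y1 ** y2).
Proof.
  intros H1 H2. revert s2 e2 k2 y2 H2. induction H1; intros s2 e2 k2 y2 H2 E.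
  - destruct s2; simpl in E; try discriminate. constructor; auto.
  - destruct s2; simpl in E; try discriminate. constructor; auto.
  - rewrite <- mA. simpl. constructor; auto. eapply IHR; eauto.
  - rewrite <- mA. simpl. constructor; auto. eapply IHR; eauto.
Qed.

Lemma peelA A B C P f g iA iB st k y : R A B C P f g iA iB st true k y ->
  (st = true /\ k = 1 /\ exists a, ~ image f a /\ y = iA a) \/
  exists k' y' a, k = S k' /\ R A B C P f g iA iB st false k' y' /\ ~ image f a /\ y = y' ** iA a.
Proof.
  intro H. remember true as en eqn:Een. induction H; try discriminate.
  - left. repeat split; auto. exists a; auto.
  - subst en. destruct (IHR eq_refl) as [[E _]|[k' [y' [a' [Ek [HR [Na' Ey]]]]]]]; [discriminate|].
    right. exists (S k'), (iA a ** y'), a'. repeat split; auto.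
    + constructor; auto.
    + rewrite Ey, mA. reflexivity.
  - subst en. destruct (IHR eq_refl) as [[_ [Ek [a' [Na' Ey]]]]|[k' [y' [a' [Ek [HR [Na' Ey]]]]]]].
    + right. exists 1, (iB b), a'. subst. repeat split; auto. constructor; auto.
    + right. exists (S k'), (iB b ** y'), a'. repeat split; auto.
      * constructor; auto.
      * rewrite Ey, mA. reflexivity.
Qed.

Lemma peelB A B C P f g iA iB st k y : R A B C P f g iA iB st false k y ->
  (st = false /\ k = 1 /\ exists b, ~ image g b /\ y = iB b) \/
  exists k' y' b, k = S k' /\ R A B C P f g iA iB st true k' y' /\ ~ image g b /\ y = y' ** iB b.
Proof.
  intro H. apply R_swap in H. simpl in H. apply peelA in H.
  destruct H as [[E1 [E2 E3]]|[k' [y' [b [E1 [E2 E3]]]]]].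
  - left. destruct st; simpl in E1; try discriminate. split; [reflexivity|split; auto].
  - right. exists k', y', b. split; [exact E1|split; [apply R_swap'; exact E2|exact E3]].
Qed.

Section Gen.
Variables (A B C P : Grp) (f : C -> A) (g : C -> B) (iA : A -> P) (iB : B -> P).
Hypotheses (Hf : is_hom C A f) (Hg : is_hom C B g).
Hypothesis Ham : is_amalgam C A B P f g iA iB.

Definition emb (t : A + B) : P := match t with inl a => iA a | inr b => iB b end.
Definition prodS (s : list (A + B)) : P := fold_right (fun t acc => emb t ** acc) gone s.
Definition gen (y : P) : Prop := exists s, y = prodS s.
Definition invsyl (t : A + B) : A + B := match t with inl a => inl (ginv a) | inr b => inr (ginv b) end.

Lemma prodS_app s1 s2 : prodS (s1 ++ s2) = prodS s1 ** prodS s2.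
Proof. induction s1 as [|t s IH]; simpl. rewrite m1l; auto. rewrite IH, mA. reflexivity. Qed.

Lemma prodS_inv s : prodS (rev (map invsyl s)) = ginv (prodS s).
Proof.
  destruct Ham as [HA [HB _]].
  induction s as [|t s IH]; simpl. symmetry. apply inv1.
  rewrite prodS_app, IH, invM. simpl. rewrite m1r. f_equal.
  destruct t; simpl; apply homV; auto.
Qed.

Lemma gen_mul x y : gen x -> gen y -> gen (x ** y).
Proof. intros [s1 ->] [s2 ->]. exists (s1 ++ s2). symmetry. apply prodS_app. Qed.
Lemma gen_one : gen gone.
Proof. exists []. reflexivity. Qed.
Lemma gen_inv x : gen x -> gen (ginv x).
Proof. intros [s ->]. exists (rev (map invsyl s)). symmetry. apply prodS_inv. Qed.

Definition SubG : Grp.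
Proof.
  refine {| gcar := {y : P | gen y};
            gmul := fun x y => exist _ (proj1_sig x ** proj1_sig y) (gen_mul _ _ (proj2_sig x) (proj2_sig y));
            gone := exist _ gone gen_one;
            ginv := fun x => exist _ (ginv (proj1_sig x)) (gen_inv _ (proj2_sig x)) |}.
  - intros. apply sig_ext. simpl. apply mA.
  - intros. apply sig_ext. simpl. apply m1l.
  - intros. apply sig_ext. simpl. apply mVl.
Defined.

Theorem gen_all y : gen y.
Proof.
  destruct Ham as [HA [HB [Hc U]]].
  set (hA' := fun a : A => (exist _ (iA a) (ex_intro _ [inl a] (eq_sym (m1r (iA a)))) : SubG)).
  set (hB' := fun b : B => (exist _ (iB b) (ex_intro _ [inr b] (eq_sym (m1r (iB b)))) : SubG)).
  assert (HhA : is_hom A SubG hA'). { intros a1 a2. apply sig_ext. simpl. apply HA. }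
  assert (HhB : is_hom B SubG hB'). { intros b1 b2. apply sig_ext. simpl. apply HB. }
  assert (Hc' : forall c, hA' (f c) = hB' (g c)). { intro c. apply sig_ext. simpl. apply Hc. }
  destruct (U SubG hA' hB' HhA HhB Hc') as [[h [Hh [E1 E2]]] _].
  destruct (U P iA iB HA HB Hc) as [_ Un].
  assert (Eq : proj1_sig (h y) = y).
  { apply (Un (fun y => proj1_sig (h y)) (fun y => y)).
    - intros a b. rewrite Hh. reflexivity.
    - intro a. rewrite E1. reflexivity.
    - intro b. rewrite E2. reflexivity.
    - intros a b. reflexivity.
    - reflexivity.
    - reflexivity. }
  rewrite <- Eq. apply proj2_sig.
Qed.

Definition LN (y : P) : Prop :=
  (exists a, y = iA a) \/ exists a0 en k y', R A B C P f g iA iB false en k y' /\ y = iA a0 ** y'.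

Lemma LN_mulA a y : LN y -> LN (iA a ** y).
Proof.
  destruct Ham as [HA [HB [Hc U]]].
  intros [[a' ->]|[a0 [en [k [y' [HR ->]]]]]].
  - left. exists (a ** a'). rewrite HA. reflexivity.
  - right. exists (a ** a0), en, k, y'. split; auto. rewrite HA, mA. reflexivity.
Qed.

Lemma LN_mulB b y : LN y -> LN (iB b ** y).
Proof.
  destruct Ham as [HA [HB [Hc U]]].
  assert (I1 : iA gone = gone) by (apply hom1; auto).
  intro HL. destruct (classic (image g b)) as [[c ->]|Nb].
  { rewrite <- Hc. apply LN_mulA. exact HL. }
  destruct HL as [[a' ->]|[a0 [en [k [y' [HR ->]]]]]].
  - destruct (classic (image f a')) as [[c ->]|Na'].
    + right. exists gone, false, 1, (iB (b ** g c)). split.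
      * constructor. apply notC_mul_r; auto.
      * rewrite I1, m1l, Hc, HB. reflexivity.
    + right. exists gone, true, 2, (iB b ** iA a'). split.
      * constructor; auto. constructor; auto.
      * rewrite I1, m1l. reflexivity.
  - destruct (classic (image f a0)) as [[c ->]|Na0].
    2:{ right. exists gone, en, (S (S k)), (iB b ** (iA a0 ** y')). split.
        - constructor; auto. constructor; auto.
        - rewrite I1, m1l. reflexivity. }
    assert (Nb' : ~ image g (b ** g c)) by (apply notC_mul_r; auto).
    assert (E0 : iB b ** (iA (f c) ** y') = iB (b ** g c) ** y') by (rewrite Hc, HB, mA; reflexivity).
    rewrite E0. clear E0.
    inversion HR as [| b1 Nb1 | | b1 en' k' y2 Nb1 HR2]; subst.
    + destruct (classic (image g (b ** g c ** b1))) as [[c' Ec']|N'].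
      * left. exists (f c'). rewrite Hc, <- Ec'. symmetry. apply HB.
      * right. exists gone, false, 1, (iB (b ** g c ** b1)). split. constructor; auto.
        rewrite I1, m1l. symmetry. apply HB.
    + destruct (classic (image g (b ** g c ** b1))) as [[c' Ec']|N'].
      * assert (E1 : iB (b ** g c) ** (iB b1 ** y2) = iA (f c') ** y2)
          by (rewrite mA, <- HB, Ec', Hc; reflexivity).
        rewrite E1. clear E1.
        inversion HR2 as [a2 Na2 | | a2 en'' k'' y3 Na2 HR3 |]; subst.
        -- left. exists (f c' ** a2). rewrite HA. reflexivity.
        -- right. exists (f c' ** a2), en, k'', y3. split; auto. rewrite HA, mA. reflexivity.
      * right. exists gone, en, (S k'), (iB (b ** g c ** b1) ** y2). split.
        -- constructor; auto.
        -- rewrite I1, m1l, (HB (b ** g c) b1), mA. reflexivity.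
Qed.

Lemma LN_all y : LN y.
Proof.
  destruct (gen_all y) as [s ->]. induction s as [|t s IH]; simpl.
  - left. exists gone. symmetry. apply hom1. destruct Ham; auto.
  - destruct t as [a|b]; simpl. apply LN_mulA; auto. apply LN_mulB; auto.
Qed.

Theorem decomp x : ~ image iA x ->
  exists a0 a1 k x0, R A B C P f g iA iB false false k x0 /\ x = iA a0 ** x0 ** iA a1.
Proof.
  intro Nx. destruct (LN_all x) as [[a Ea]|[a0 [en [k [y' [HR Ex]]]]]].
  - exfalso. apply Nx. exists a. auto.
  - destruct en.
    + destruct (peelA _ _ _ _ _ _ _ _ _ _ _ HR) as [[E _]|[k' [y'' [a [Ek [HR' [Na Ey]]]]]]]; [discriminate|].
      exists a0, a, k', y''. split; auto. rewrite Ex, Ey, mA. reflexivity.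
    + exists a0, gone, k, y'. split; auto. rewrite Ex. rewrite hom1 by (destruct Ham; auto). rewrite m1r. reflexivity.
Qed.
End Gen.

Definition CI {A C P : Grp} (f : C -> A) (iA : A -> P) (d : P) : Prop := exists c, d = iA (f c).

Definition Sprop (A B C P : Grp) (f : C -> A) (g : C -> B) (iA : A -> P) (iB : B -> P)
  (n : option nat) (x : P) : Prop :=
  forall w : list (bool * P), w <> [] -> Forall (fun p => CI f iA (snd p)) w -> chain w -> counts_ok n w ->
  exists k, R A B C P f g iA iB false false k (word_eval x w).

Definition Hyps (A B C P : Grp) f g iA iB n : Prop :=
  is_hom C A f /\ is_hom C B g /\ injective f /\ injective g /\ is_amalgam C A B P f g iA iB /\
  nRF_pair A (image f) n /\ nRF_pair B (image g) n.

Lemma Hyps_swap A B C P f g iA iB n : Hyps A B C P f g iA iB n -> Hyps B A C P g f iB iA n.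
Proof. intros [H1 [H2 [H3 [H4 [H5 [H6 H7]]]]]]. exact (conj H2 (conj H1 (conj H4 (conj H3 (conj (amalgam_swap _ _ _ _ _ _ _ _ H5) (conj H7 H6)))))). Qed.

Lemma R_false_inv A B C P f g iA iB en k y : R A B C P f g iA iB false en k y ->
  (en = false /\ k = 1 /\ exists b, ~ image g b /\ y = iB b) \/
  exists b k' y', k = S k' /\ ~ image g b /\ R A B C P f g iA iB true en k' y' /\ y = iB b ** y'.
Proof. intro H. inversion H; subst; [left|right]; eauto 10. Qed.

Definition cnte {G : Grp} (e : bool) (w : list (bool * G)) := if e then cntq (fun b => b) w else cntq negb w.

Lemma cnte_cons {G : Grp} e e' (d : G) w : cnte e ((e', d) :: w) = (if Bool.eqb e e' then 1 else 0) + cnte e w.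
Proof. unfold cnte. destruct e, e'; rewrite cntq_cons; reflexivity. Qed.

Lemma same_sign_chain {G : Grp} e (wr : list (bool * G)) : Forall (fun p => fst p = e) wr -> chain wr.
Proof.
  induction wr as [|p wr IH]; intro F; simpl; auto. inversion F; subst.
  destruct wr as [|p' wr']; auto. split. 
  - inversion H2; subst. unfold Jn. rewrite H1. intro E. destruct (fst p); discriminate.
  - apply IH; auto.
Qed.

Lemma same_sign_counts {G : Grp} n (Hn : forall m, n = Some m -> 2 <= m) e (wr w : list (bool * G)) :
  (forall p, In p wr -> fst p = e) -> length wr <= cnte e w -> counts_ok n w -> counts_ok n wr.
Proof.
  intros F L [C1 C2].
  assert (E1 : cnte e wr = length wr).
  { clear L. induction wr as [|p wr IH]; [destruct e; reflexivity|]. destruct p as [e' d].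
    assert (Ee : e' = e) by (apply (F (e',d)); left; auto). subst e'.
    rewrite cnte_cons. rewrite Bool.eqb_reflx. simpl.
    rewrite IH; auto. intros; apply F; right; auto. }
  assert (E2 : cnte (negb e) wr = 0).
  { clear L E1. induction wr as [|p wr IH]; [destruct e; reflexivity|]. destruct p as [e' d].
    assert (Ee : e' = e) by (apply (F (e',d)); left; auto). subst e'.
    rewrite cnte_cons. replace (Bool.eqb (negb e) e) with false by (destruct e; reflexivity).
    simpl. apply IH. intros; apply F; right; auto. }
  unfold cnte in *. destruct e; simpl in *; split.
  - eapply below_le. exact C1. lia.
  - rewrite E2. apply below_small; auto.
  - rewrite E2. apply below_small; auto.
  - eapply below_le. exact C2. lia.
Qed.

Lemma cntq_le_cons {G : Grp} q (p : bool * G) w : cntq q w <= cntq q (p :: w).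
Proof. rewrite cntq_cons. lia. Qed.

Section Step.
Variables (A B C P : Grp) (f : C -> A) (g : C -> B) (iA : A -> P) (iB : B -> P) (n : option nat).
Hypothesis Hn : forall m, n = Some m -> 2 <= m.
Hypothesis HH : Hyps A B C P f g iA iB n.
Variables (b1 bl : B) (x' : P).
Hypotheses (Nb1 : ~ image g b1) (Nbl : ~ image g bl).
Hypothesis IHx : forall w, w <> [] -> Forall (fun p => CI f iA (snd p)) w -> chain w -> counts_ok n w ->
  exists k, R A B C P f g iA iB true true k (word_eval x' w).

Let x := iB b1 ** x' ** iB bl.
Definition beta (e : bool) := if e then b1 else ginv bl.
Definition gam (e : bool) := if e then bl else ginv b1.
Definition AAany (z : P) := exists k, R A B C P f g iA iB true true k z.
Definition Tail (T : P) := exists q, ~ image g q /\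
  (T = iB q \/ exists m z2, ~ image g m /\ AAany z2 /\ T = iB m ** z2 ** iB q).

Lemma xpow e : gpow e x = iB (beta e) ** gpow e x' ** iB (gam e).
Proof.
  destruct HH as [_ [Hg [_ [_ [[HA [HB _]] _]]]]].
  destruct e; simpl; unfold x. reflexivity.
  rewrite !invM, !(homV _ _ iB HB), !mA. reflexivity.
Qed.

Lemma beta_nC e : ~ image g (beta e).
Proof. destruct HH as [_ [Hg _]]. destruct e; simpl; auto. apply notC_inv; auto. Qed.
Lemma gam_nC e : ~ image g (gam e).
Proof. destruct HH as [_ [Hg _]]. destruct e; simpl; auto. apply notC_inv; auto. Qed.

Lemma wr_AA e (wr w : list (bool * P)) : wr <> [] -> Forall (fun p => fst p = e /\ CI f iA (snd p)) wr ->
  length wr <= cnte e w -> counts_ok n w -> AAany (word_eval x' wr).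
Proof.
  intros Hne F L Cw. apply IHx; auto.
  - eapply Forall_impl; [|exact F]. intros p [_ H]; auto.
  - apply (same_sign_chain e). eapply Forall_impl; [|exact F]. intros p [H _]; auto.
  - apply (same_sign_counts n Hn e wr w); auto. intros p Hp. rewrite Forall_forall in F. apply F; auto.
Qed.

Definition Inv (w : list (bool * P)) : Prop :=
  exists e1 wr T, fst (hd (true, gone) w) = e1 /\ wr <> [] /\
    Forall (fun p => fst p = e1 /\ CI f iA (snd p)) wr /\ length wr <= cnte e1 w /\ Tail T /\
    word_eval x w = iB (beta e1) ** word_eval x' wr ** T.

Lemma CI_gone : CI f iA gone.
Proof.
  destruct HH as [Hf [_ [_ [_ [[HA _] _]]]]]. exists gone. rewrite (hom1 _ _ f Hf), (hom1 _ _ iA HA). reflexivity.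
Qed.

Lemma inv_main w : w <> [] -> Forall (fun p => CI f iA (snd p)) w -> chain w -> counts_ok n w -> Inv w.
Proof.
  destruct HH as [Hf [Hg [If [Ig [[HA [HB [Hc U]]] [RFA RFB]]]]]].
  induction w as [|[e d] r IH]; intros Hne F Ch Cn; [congruence|].
  inversion F as [|? ? [c Ed] Fr]; subst. simpl in Ed. subst d.
  destruct r as [|[e' d'] r'].
  -
    exists e, [(e, gone)], (iB (gam e ** g c)). split; [reflexivity|]. split; [discriminate|].
    split. { constructor; [split; [reflexivity|apply CI_gone]|constructor]. }
    split. { rewrite cnte_cons, Bool.eqb_reflx. simpl. lia. }
    split. { exists (gam e ** g c). split; [apply notC_mul_r; auto; apply gam_nC|left; reflexivity]. }
    simpl. rewrite xpow, Hc, HB, !m1r, !mA. reflexivity.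
  - destruct (IH ltac:(discriminate) Fr (chain_tl _ _ Ch)) as [e1 [wr [T [He1 [Hwr [Fwr [Lwr [HT Ev]]]]]]]].
    { eapply counts_ok_le; [| |exact Cn]; apply cntq_le_cons. }
    simpl in He1. subst e1.
    assert (Ecomp : word_eval x ((e, iA (f c)) :: (e', d') :: r') =
                    iB (beta e) ** gpow e x' ** iB (gam e ** g c ** beta e') ** word_eval x' wr ** T).
    { rewrite word_eval_cons, Ev, xpow, Hc, !HB, !mA. reflexivity. }
    destruct (classic (image g (gam e ** g c ** beta e'))) as [[c' Ec']|Ngood].
    +
      assert (Ee : e = e').
      { destruct (Bool.bool_dec e e') as [|Ne]; auto. exfalso.
        assert (En : e = negb e') by (destruct e, e'; simpl; congruence || tauto).
        destruct Ch as [J _]. unfold Jn in J. simpl in J. specialize (J En).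
        assert (Ngc : g c <> gone).
        { intro E0. apply J. rewrite Hc, E0. apply hom1; auto. }
        destruct e, e'; simpl in En; try discriminate; simpl in Ec'.
        - apply (malnormal B (image g) n Hn RFB (image_subgrp _ _ g Hg) bl (g c) Nbl); auto.
          exists c; auto. exists c'. auto.
        - apply (malnormal B (image g) n Hn RFB (image_subgrp _ _ g Hg) (ginv b1) (g c)); auto.
          apply notC_inv; auto. exists c; auto. exists c'. rewrite invK. auto. }
      subst e'.
      exists e, ((e, iA (f c')) :: wr), T. split; [reflexivity|]. split; [discriminate|].
      split. { constructor; auto. split; auto. exists c'; auto. }
      split. { rewrite cnte_cons, Bool.eqb_reflx. simpl. lia. }
      split; auto.
      rewrite Ecomp, Ec', <- Hc, word_eval_cons, !mA. reflexivity.
    +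
      assert (AAr : AAany (word_eval x' wr)).
      { apply (wr_AA e' wr ((e', d') :: r')); auto.
        eapply counts_ok_le; [| |exact Cn]; apply cntq_le_cons. }
      exists e, [(e, gone)], (iB (gam e ** g c ** beta e') ** word_eval x' wr ** T).
      split; [reflexivity|]. split; [discriminate|].
      split. { constructor; [split; [reflexivity|apply CI_gone]|constructor]. }
      split. { rewrite cnte_cons, Bool.eqb_reflx. simpl. lia. }
      split.
      * destruct HT as [q [Nq [ET|[m2 [z2 [Nm2 [AA2 ET]]]]]]].
        -- exists q. split; auto. right. exists (gam e ** g c ** beta e'), (word_eval x' wr).
           split; auto. split; auto. subst T. reflexivity.
        -- exists q. split; auto. right. exists (gam e ** g c ** beta e'), (word_eval x' wr ** (iB m2 ** z2)).
           split; auto. split.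
           ++ destruct AAr as [k1 R1]. destruct AA2 as [k2 R2].
              eexists. eapply R_concat; [exact R1| apply RcB; [exact Nm2|exact R2] | reflexivity].
           ++ subst T. rewrite !mA. reflexivity.
      * rewrite Ecomp. simpl. rewrite !m1r, !mA. reflexivity.
Qed.


Theorem step_S w : w <> [] -> Forall (fun p => CI f iA (snd p)) w -> chain w -> counts_ok n w ->
  exists k, R A B C P f g iA iB false false k (word_eval x w).
Proof.
  intros Hne F Ch Cn.
  destruct (inv_main w Hne F Ch Cn) as [e1 [wr [T [_ [Hwr [Fwr [Lwr [HT Ev]]]]]]]].
  destruct (wr_AA e1 wr w Hwr Fwr Lwr Cn) as [kz Rz].
  rewrite Ev. destruct HT as [q [Nq [ET|[m [z2 [Nm [[k2 R2] ET]]]]]]]; subst T.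
  - eexists. rewrite <- mA. apply RcB. apply beta_nC.
    eapply R_concat; [exact Rz| apply R1B; exact Nq | reflexivity].
  - eexists. rewrite <- !mA. apply RcB. apply beta_nC.
    eapply R_concat with (s2 := false); [exact Rz| |reflexivity].
    apply RcB; [exact Nm|]. eapply R_concat with (s2 := false); [exact R2| apply R1B; exact Nq | reflexivity].
Qed.
End Step.

Lemma CI_swap (A B C P : Grp) (f : C -> A) (g : C -> B) (iA : A -> P) (iB : B -> P)
  (Hc : forall c, iA (f c) = iB (g c)) d : CI f iA d -> CI g iB d.
Proof. intros [c E]. exists c. rewrite E. apply Hc. Qed.

Theorem S_all n (Hn : forall m, n = Some m -> 2 <= m) : forall k A B C P f g iA iB,
  Hyps A B C P f g iA iB n -> forall x, R A B C P f g iA iB false false k x -> Sprop A B C P f g iA iB n x.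
Proof.
  intro k. induction k as [k IH] using lt_wf_ind. intros A B C P f g iA iB HH x HR.
  pose proof HH as [Hf [Hg [If [Ig [[HA [HB [Hc U]]] [RFA RFB]]]]]].
  destruct (R_false_inv _ _ _ _ _ _ _ _ _ _ _ HR) as [[_ [_ [b [Nb ->]]]]|[b1 [k' [y [Ek [Nb1 [Hy ->]]]]]]].
  - intros w Hne F Ch Cn.
    destruct (pullback iB (image g) w) as [wB [Ew FB]].
    { eapply Forall_impl; [|exact F]. intros [e d] [c Ec]. simpl in *. exists (g c).
      split. rewrite Ec; auto. exists c; auto. }
    subst w. rewrite word_eval_hom by auto. exists 1. apply R1B.
    apply (block_notin B (image g) n (image_subgrp _ _ g Hg) RFB b Nb wB); auto.
    + intro E; subst; simpl in Hne; congruence.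
    + apply (chain_mapc B P iB (hom1 _ _ iB HB)); auto.
    + apply (counts_mapc iB); auto.
  - destruct (peelB _ _ _ _ _ _ _ _ _ _ _ Hy) as [[E _]|[k'' [x' [bl [Ek' [Hx' [Nbl Ey]]]]]]]; [discriminate|].
    subst y. intros w Hne F Ch Cn.
    assert (IHx : forall w, w <> [] -> Forall (fun p => CI f iA (snd p)) w -> chain w -> counts_ok n w ->
      exists k, R A B C P f g iA iB true true k (word_eval x' w)).
    { intros w' Hne' F' Ch' Cn'.
      assert (Hs := IH k'' ltac:(lia) B A C P g f iB iA (Hyps_swap _ _ _ _ _ _ _ _ _ HH) x'
                     (R_swap _ _ _ _ _ _ _ _ _ _ _ _ Hx')).
      destruct (Hs w' Hne') as [k3 R3]; auto.
      { eapply Forall_impl; [|exact F']. intros p Hp. apply CI_swap with (iA := iA) (f := f); auto. }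
      exists k3. exact (R_swap' _ _ _ _ _ _ _ _ true true _ _ R3). }
    rewrite mA. exact (step_S A B C P f g iA iB n Hn HH b1 bl x' Nb1 Nbl IHx w Hne F Ch Cn).
Qed.

Fixpoint trw {G : Grp} (hf tf : bool -> G) (e1 : bool) (w : list (bool * G)) : list (bool * G) :=
  match w with
  | [] => []
  | (e, d) :: r => (e, tf e ** d ** hf (match r with [] => e1 | p :: _ => fst p end)) :: trw hf tf e1 r
  end.

Section Trw.
Variables (G : Grp) (hf tf : bool -> G).
Hypothesis Hht : forall e, hf (negb e) = ginv (tf e).

Lemma trw_eval (x x0 : G) (Hx : forall e, gpow e x = hf e ** gpow e x0 ** tf e) e1 w :
  w <> [] -> word_eval x w ** hf e1 = hf (fst (hd (true, gone) w)) ** word_eval x0 (trw hf tf e1 w).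
Proof.
  induction w as [|[e d] r IH]; intro Hne; [congruence|].
  destruct r as [|[e' d'] r'].
  - simpl. rewrite Hx, !m1r, !mA. reflexivity.
  - change (word_eval x ((e, d) :: (e', d') :: r') ** hf e1 = hf e **
      word_eval x0 ((e, tf e ** d ** hf e') :: trw hf tf e1 ((e', d') :: r'))).
    rewrite word_eval_cons, <- mA, IH by discriminate. rewrite word_eval_cons. simpl fst.
    rewrite Hx, !mA. reflexivity.
Qed.

Lemma trw_cntq q e1 (w : list (bool * G)) : cntq q (trw hf tf e1 w) = cntq q w.
Proof.
  induction w as [|[e d] r IH]; simpl; auto. rewrite !cntq_cons. simpl. rewrite IH. reflexivity.
Qed.

Lemma trw_nil e1 (w : list (bool * G)) : w <> [] -> trw hf tf e1 w <> [].
Proof. destruct w as [|[e d] r]; simpl; congruence. Qed.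

Lemma trw_hd e1 (w : list (bool * G)) : fst (hd (true, gone) (trw hf tf e1 w)) = fst (hd (true, gone) w) \/ w = [].
Proof. destruct w as [|[e d] r]; simpl; auto. Qed.

Lemma conj_ne e d : d <> gone -> tf e ** d ** hf (negb e) <> gone.
Proof. intros Hd E. rewrite Hht in E. apply conj_eq1 in E. auto. Qed.

Lemma trw_chain e1 (w : list (bool * G)) : chain w -> chain (trw hf tf e1 w).
Proof.
  induction w as [|[e d] r IH]; simpl; auto.
  destruct r as [|[e' d'] r']; simpl; auto.
  intros [J C]. split.
  - unfold Jn in *. simpl in *. intro E. replace e' with (negb e) by (rewrite E; destruct e'; reflexivity).
    apply conj_ne. apply J; auto.
  - apply IH; auto.
Qed.

Lemma trw_last e1 (u : list (bool * G)) e d p :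
  last (trw hf tf e1 (u ++ [(e, d)])) p = (e, tf e ** d ** hf e1).
Proof.
  induction u as [|[e' d'] u IH]; simpl; auto.
  destruct (u ++ [(e,d)]) as [|q l] eqn:El.
  - destruct u; discriminate.
  - rewrite <- IH. destruct q as [eq dq]. simpl. reflexivity.
Qed.

Lemma trw_cyc (w : list (bool * G)) : cyc w -> cyc (trw hf tf (fst (hd (true, gone) w)) w).
Proof.
  intros [Ch L]. split. apply trw_chain; auto.
  intros p0 r E. destruct w as [|[e1 d1] w']; [discriminate|].
  simpl in E. injection E as E1 _. subst p0. simpl fst.
  destruct (exists_last (l := (e1, d1) :: w') ltac:(discriminate)) as [u [[em dm] Eu]].
  specialize (L _ _ eq_refl). rewrite Eu in L |- *.
  rewrite trw_last. rewrite (last_indep _ _ (true, gone)) in L by (destruct u; discriminate).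
  replace (last (u ++ [(em, dm)]) (true, gone)) with (em, dm) in L by (rewrite last_app_cons; reflexivity).
  unfold Jn in *. simpl in *. intro E. 
  specialize (L E).
  replace e1 with (negb em) by (rewrite E; destruct e1; reflexivity).
  apply conj_ne. auto.
Qed.
End Trw.

Lemma first_split {T : Type} (Q : T -> Prop) (l : list T) :
  ~ Forall Q l -> exists u p v, l = u ++ p :: v /\ Forall Q u /\ ~ Q p.
Proof.
  induction l as [|a l IH]; intro N.
  - exfalso; apply N; constructor.
  - destruct (classic (Q a)) as [Qa|Na].
    + destruct IH as [u [p [v [E [F Np]]]]]. { intro F; apply N; constructor; auto. }
      exists (a :: u), p, v. subst; split; auto.
    + exists [], a, l. split; auto.
Qed.

Lemma In_last {T : Type} (l : list T) d : l <> [] -> In (last l d) l.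
Proof.
  intro Hl. destruct (exists_last Hl) as [u [a ->]]. rewrite last_app_cons. simpl.
  apply in_or_app. right. left. reflexivity.
Qed.

Lemma trw_forall {G : Grp} (D : G -> Prop) (hf tf : bool -> G) e1 w :
  subgrp D -> (forall e, D (hf e)) -> (forall e, D (tf e)) ->
  Forall (fun p => D (snd p)) w -> Forall (fun p => D (snd p)) (trw hf tf e1 w).
Proof.
  intros [D1 [DM DV]] Hh Ht F. induction F as [|[e d] r Hd F IH]; simpl; constructor; auto.
  simpl. apply DM; auto.
Qed.

Section Core.
Variables (A B C P : Grp) (f : C -> A) (g : C -> B) (iA : A -> P) (iB : B -> P) (n : option nat).
Hypothesis Hn : forall m, n = Some m -> 2 <= m.
Hypothesis HH : Hyps A B C P f g iA iB n.
Variables (x0 : P) (k0 : nat).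
Hypothesis HR0 : R A B C P f g iA iB false false k0 x0.

Lemma topclaim : forall L, L <> [] -> Forall (fun p => image iA (snd p)) L -> chain L -> counts_ok n L ->
  ~ CI f iA (snd (last L (true, gone))) -> exists k, R A B C P f g iA iB false true k (word_eval x0 L).
Proof.
  pose proof HH as [Hf [Hg [If [Ig [[HA [HB [Hc U]]] [RFA RFB]]]]]].
  intro L. remember (length L) as len eqn:Hlen. revert L Hlen. induction len as [len IH] using lt_wf_ind.
  intros L Hlen Hne F Ch Cn NL.
  destruct (first_split (fun p => CI f iA (snd p)) L) as [u [[e d] [v [EL [Fu Nd]]]]].
  { intro FA. apply NL. rewrite Forall_forall in FA. apply FA. apply In_last; auto. }
  simpl in Nd.
  assert (Hd : image iA d).
  { rewrite EL in F. apply Forall_app in F. destruct F as [_ F]. apply Forall_inv in F. exact F. }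
  destruct Hd as [a Ea].
  assert (Na : ~ image f a) by (intros [c Ec]; apply Nd; exists c; subst; reflexivity).
  assert (EL2 : L = (u ++ [(e, d)]) ++ v) by (rewrite EL, <- app_assoc; reflexivity).
  assert (HY : exists k1, R A B C P f g iA iB false false k1 (word_eval x0 (u ++ [(e, gone)]))).
  { apply (S_all n Hn k0 A B C P f g iA iB HH x0 HR0).
    - destruct u; discriminate.
    - apply Forall_app; split; [exact Fu| constructor; [|constructor]].
      exists gone. simpl. rewrite (hom1 _ _ f Hf), (hom1 _ _ iA HA). reflexivity.
    - rewrite EL2 in Ch. apply chain_prefix in Ch. apply chain_snoc_indep with d. exact Ch.
    - apply counts_ok_le with L; auto; rewrite EL2, !cntq_app; unfold cntq; simpl; [destruct e|destruct (negb e)]; simpl; lia. }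
  destruct HY as [k1 R1].
  assert (EW : word_eval x0 L = word_eval x0 (u ++ [(e, gone)]) ** iA a ** word_eval x0 v).
  { rewrite EL2, word_eval_app. f_equal. rewrite word_eval_snoc, m1l, Ea. reflexivity. }
  assert (R2 : R A B C P f g iA iB false true (k1 + 1) (word_eval x0 (u ++ [(e, gone)]) ** iA a)).
  { eapply R_concat with (s2 := true); [exact R1| apply R1A; exact Na | reflexivity]. }
  destruct v as [|pv v'].
  - exists (k1 + 1). rewrite EW. simpl word_eval at 2. rewrite m1r. exact R2.
  - destruct (IH (length (pv :: v')) ltac:(rewrite Hlen, EL2, !length_app; simpl; lia) (pv :: v') eq_refl)
      as [k3 R3].
    + discriminate.
    + rewrite EL2 in F. apply Forall_app in F. tauto.
    + rewrite EL2 in Ch. apply chain_suffix in Ch. exact Ch.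
    + apply counts_ok_le with L; auto; rewrite EL2, !cntq_app; lia.
    + rewrite EL, last_app_cons in NL. exact NL.
    + exists (k1 + 1 + k3). rewrite EW. eapply R_concat with (s2 := false); [exact R2 | exact R3 | reflexivity].
Qed.
End Core.

Theorem core n (Hn : forall m, n = Some m -> 2 <= m) A B C P f g iA iB :
  Hyps A B C P f g iA iB n -> nRF_pair P (image iA) n.
Proof.
  intro HH. pose proof HH as [Hf [Hg [If [Ig [Ham [RFA RFB]]]]]]. pose proof Ham as [HA [HB [Hc U]]].
  intros x Nx. apply nRF_intro. intros w Hne F Cy Cn.
  destruct (decomp A B C P f g iA iB Hg Ham x Nx) as [a0 [a1 [k0 [x0 [HR0 Ex]]]]].
  set (hf := fun e : bool => iA (if e then a0 else ginv a1)).
  set (tf := fun e : bool => iA (if e then a1 else ginv a0)).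
  assert (Hht : forall e, hf (negb e) = ginv (tf e)) by (intro e; destruct e; unfold hf, tf; simpl; rewrite (homV _ _ iA HA); try rewrite invK; reflexivity).
  assert (Hx : forall e, gpow e x = hf e ** gpow e x0 ** tf e).
  { intro e; destruct e; unfold hf, tf; simpl. rewrite Ex; reflexivity.
    rewrite Ex, !invM, !(homV _ _ iA HA), !mA. reflexivity. }
  set (e1 := fst (hd (true, gone) w)).
  set (w' := trw hf tf e1 w).
  assert (EV : word_eval x w ** hf e1 = hf e1 ** word_eval x0 w') by (apply trw_eval; auto).
  intro E0. rewrite E0, m1l in EV.
  assert (W0 : word_eval x0 w' = gone).
  { apply (mcanl (hf e1)). rewrite m1r. symmetry. exact EV. }
  revert W0.
  assert (Hne' : w' <> []) by (apply trw_nil; auto).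
  assert (Cy' : cyc w') by (apply trw_cyc; auto).
  assert (Cn' : counts_ok n w') by (unfold counts_ok, w'; rewrite !trw_cntq; auto).
  assert (F' : Forall (fun p => image iA (snd p)) w').
  { apply trw_forall; auto. apply image_subgrp; auto. intro e; eexists; reflexivity.
    intro e; eexists; reflexivity. }
  destruct (classic (Forall (fun p => CI f iA (snd p)) w')) as [FA|NFA].
  - destruct (S_all n Hn k0 A B C P f g iA iB HH x0 HR0 w' Hne' FA (proj1 Cy') Cn') as [k R1].
    exact (NF A B C P f g iA iB Hf Hg If Ig Ham _ _ _ _ R1).
  - destruct (first_split _ w' NFA) as [u [[e d] [v [Ew [_ Nd]]]]].
    destruct v as [|pv v'].
    + destruct (topclaim A B C P f g iA iB n Hn HH x0 k0 HR0 w' Hne' F' (proj1 Cy') Cn') as [k R1].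
      { rewrite Ew, last_app_cons. simpl. exact Nd. }
      exact (NF A B C P f g iA iB Hf Hg If Ig Ham _ _ _ _ R1).
    + set (U0 := u ++ [(e,d)]). set (V0 := pv :: v').
      assert (Ew2 : w' = U0 ++ V0) by (rewrite Ew; unfold U0, V0; rewrite <- app_assoc; reflexivity).
      assert (Cy2 : cyc (V0 ++ U0)).
      { apply cyc_rot; [unfold U0; destruct u; discriminate| discriminate| rewrite <- Ew2; auto]. }
      destruct (topclaim A B C P f g iA iB n Hn HH x0 k0 HR0 (V0 ++ U0)) as [k R1].
      * unfold V0; discriminate.
      * rewrite Ew2 in F'. apply Forall_app in F'. apply Forall_app. tauto.
      * exact (proj1 Cy2).
      * unfold counts_ok in *. rewrite Ew2 in Cn'. rewrite !cntq_app in *. rewrite (Nat.add_comm (cntq _ V0)), (Nat.add_comm (cntq negb V0)). exact Cn'.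
      * unfold U0. rewrite app_assoc, last_app_cons. simpl. exact Nd.
      * intro W0. apply (NF A B C P f g iA iB Hf Hg If Ig Ham _ _ _ _ R1).
        rewrite word_eval_app. rewrite Ew2, word_eval_app in W0. apply mul_eq1 in W0. rewrite W0. apply mVr.
Qed.

Theorem lemma6p3
  (n : option nat) (Hn : forall m, n = Some m -> 2 <= m)
  (k : nat) (Hk : 1 <= k)
  (H C G : nat -> Grp)
  (a : forall i, C i -> H i) (b : forall i, C i -> H (S i))
  (phi : forall i, H i -> G i) (iota : forall i, G i -> G (S i))
  (Ha : forall i, 1 <= i <= k -> is_hom (C i) (H i) (a i) /\ injective (a i))
  (Hb : forall i, 1 <= i <= k -> is_hom (C i) (H (S i)) (b i) /\ injective (b i))
  (HG1 : is_hom (H 1) (G 1) (phi 1) /\ injective (phi 1) /\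
         (forall y : G 1, exists x, phi 1 x = y))
  (HGS : forall i, 1 <= i <= k ->
     is_amalgam (C i) (G i) (H (S i)) (G (S i))
       (fun c => phi i (a i c)) (b i) (iota i) (phi (S i)))
  (HRFa : forall i, 1 <= i <= k -> nRF_pair (H i) (image (a i)) n)
  (HRFb : forall i, 1 <= i <= k -> nRF_pair (H (S i)) (image (b i)) n) :
  nRF_pair (G (S k)) (image (iota k)) n /\
  nRF_pair (G (S k)) (image (phi (S k))) n.
Proof.
  assert (HY : forall i, 1 <= i <= k ->
     is_hom (H i) (G i) (phi i) /\ injective (phi i) /\ nRF_pair (G i) (image (phi i)) n ->
     Hyps (G i) (H (S i)) (C i) (G (S i)) (fun c => phi i (a i c)) (b i) (iota i) (phi (S i)) n).
  { intros i Hi [Hp [Ip Rp]]. destruct (Ha i Hi) as [Hai Iai]. destruct (Hb i Hi) as [Hbi Ibi].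
    split; [apply hom_comp; auto|]. split; [auto|]. split; [apply inj_comp; auto|]. split; [auto|].
    split; [apply HGS; auto|]. split; [|apply HRFb; auto].
    apply nRF_trans; auto. }
  assert (Inv : forall j, j <= k -> is_hom (H (S j)) (G (S j)) (phi (S j)) /\ injective (phi (S j)) /\
                              nRF_pair (G (S j)) (image (phi (S j))) n).
  { induction j as [|j IHj]; intro Hj.
    - destruct HG1 as [h1 [i1 s1]]. split; [auto|split; [auto|]]. intros y Ny. exfalso.
      destruct (s1 y) as [x Ex]. apply Ny. exists x; auto.
    - assert (Hyi := HY (S j) ltac:(lia) (IHj ltac:(lia))).
      assert (Hys := Hyps_swap _ _ _ _ _ _ _ _ _ Hyi).
      destruct Hys as [Hf [Hg [If [Ig [Ham _]]]]].
      split; [|split].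
      + destruct Ham as [HB _]. exact HB.
      + apply (iA_inj _ _ _ _ _ _ _ _ Hf Hg If Ig Ham).
      + apply (core n Hn _ _ _ _ _ _ _ _ (Hyps_swap _ _ _ _ _ _ _ _ _ Hyi)). }
  destruct k as [|k']; [lia|].
  assert (Hyi := HY (S k') ltac:(lia) (Inv k' ltac:(lia))).
  split.
  - apply (core n Hn _ _ _ _ _ _ _ _ Hyi).
  - apply (core n Hn _ _ _ _ _ _ _ _ (Hyps_swap _ _ _ _ _ _ _ _ _ Hyi)).
Qed.
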